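(* Let $P\in I(\mathcal{S})$ be defined by $P(\sigma,\pi)=\binom{\pi}{\sigma}$. For all $\sigma,\pi\in\mathcal{S}$ and every integer $d$ (for $d<0$, $P^d=(P^{-1})^{-d}$; $P^0=\delta$), $$P^d(\sigma,\pi)=d^{|\pi|-|\sigma|}P(\sigma,\pi),$$ with the convention $0^0=1$.
   Context: $\mathcal{S}=\bigcup_{n\ge0}\mathcal{S}_n$ where $\mathcal{S}_n$ is the set of permutations of $[n]$ written as words; $|\pi|$ is the length. For $\sigma\in\mathcal{S}_k$, $\pi\in\mathcal{S}_n$, $\binom{\pi}{\sigma}$ is the number of order-preserving injections $\varphi:[k]\to[n]$ such that $\pi(\varphi(1))\cdots\pi(\varphi(k))$ is order-isomorphic to $\sigma$ (i.e. $\pi(\varphi(i))<\pi(\varphi(j))\iff\sigma(i)<\sigma(j)$). $\mathcal{S}$ is ordered by $\sigma\le\pi$ iff $\binom{\pi}{\sigma}>0$. $I(\mathcal{S})$ is its incidence algebra over $\mathbb{Q}$ with convolution $(FG)(x,y)=\sum_{x\le z\le y}F(x,z)G(z,y)$ and identity $\delta(x,y)=[x=y]$. *)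

(* Defs.v *)
From HB Require Import structures.
From mathcomp Require Import all_boot all_order all_algebra.
Set Implicit Arguments. Unset Strict Implicit. Unset Printing Implicit Defensive.
Import Order.TTheory GRing.Theory Num.Theory.
Local Open Scope ring_scope.

Definition is_perm (s : seq nat) : bool := perm_eq s (iota 1 (size s)).

Definition perms (n : nat) : seq (seq nat) := permutations (iota 1 n).

(* All subsequences of s, listed with multiplicity: one entry per subset of
   positions (i.e. per order-preserving injection). *)
Fixpoint subseqs (s : seq nat) : seq (seq nat) :=
  match s with
  | [::] => [:: [::]]
  | x :: s' => map (cons x) (subseqs s') ++ subseqs s'
  end.

Definition order_iso (t u : seq nat) : bool :=
  (size t == size u) &&
  [forall i : 'I_(size t), forall j : 'I_(size t),
     (nth 0 t i < nth 0 t j)%N == (nth 0 u i < nth 0 u j)%N].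

(* binom pi sigma : number of occurrences of sigma in pi. *)
Definition occ (sigma pi : seq nat) : nat := count (order_iso^~ sigma) (subseqs pi).

Definition patle (sigma pi : seq nat) : bool := (0 < occ sigma pi)%N.

Definition incfun := seq nat -> seq nat -> rat.

Definition idelta : incfun := fun x y => (x == y)%:R.

(* convolution: sum over z in S with x <= z <= y (such z have |z| <= |y|) *)
Definition conv (F G : incfun) : incfun := fun x y =>
  \sum_(n < (size y).+1) \sum_(z <- perms n | patle x z && patle z y) F x z * G z y.

(* Inverse in the incidence algebra (for F with F(x,x) invertible), defined by
   the standard recursion  sum_{x<=z<=y} F(x,z) G(z,y) = delta(x,y),
   by recursion on fuel >= |y| - |x|. *)
Fixpoint inv_aux (F : incfun) (k : nat) (x y : seq nat) : rat :=
  if x == y then (F x x)^-1 else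
  match k with
  | 0 => 0
  | k'.+1 => - (F x x)^-1 *
      \sum_(n < (size y).+1)
        \sum_(z <- perms n | patle x z && patle z y && (z != x))
          F x z * inv_aux F k' z y
  end.

Definition inv (F : incfun) : incfun := fun x y => inv_aux F (size y - size x) x y.

Definition ipow (F : incfun) (d : int) : incfun :=
  match d with
  | Posz n => iter n (conv F) idelta
  | Negz n => iter n.+1 (conv (inv F)) idelta
  end.

Definition Pmat : incfun := fun sigma pi => (occ sigma pi)%:R.

(* Main.v *)
Require Import Defs.
From HB Require Import structures.
From mathcomp Require Import all_boot all_order all_algebra.
From mathcomp Require Import ring zify.
Import Order.TTheory GRing.Theory Num.Theory.
Set Implicit Arguments. Unset Strict Implicit. Unset Printing Implicit Defensive.

Lemma order_isoP (t u : seq nat) :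
  reflect (size t = size u /\ forall i j, i < size t -> j < size t ->
             (nth 0 t i < nth 0 t j) = (nth 0 u i < nth 0 u j))
          (order_iso t u).
Proof.
apply: (iffP andP) => [[/eqP Hs /forallP H]|[Hs H]]; split => //.
- move=> i j Hi Hj; exact: (eqP (forallP (H (Ordinal Hi)) (Ordinal Hj))).
- by apply/eqP.
- by apply/forallP => i; apply/forallP => j; apply/eqP; apply: H.
Qed.

Lemma order_iso_refl t : order_iso t t.
Proof. by apply/order_isoP; split. Qed.

Lemma order_iso_size t u : order_iso t u -> size t = size u.
Proof. by case/order_isoP. Qed.

Lemma order_iso_sym t u : order_iso t u -> order_iso u t.
Proof.
case/order_isoP => Hs H; apply/order_isoP; split => // i j Hi Hj.
by rewrite H // Hs.
Qed.

Lemma order_iso_trans t u v : order_iso t u -> order_iso u v -> order_iso t v.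
Proof.
case/order_isoP => Hs H /order_isoP [Hs' H']; apply/order_isoP; split.
  by rewrite Hs.
by move=> i j Hi Hj; rewrite H // H' // -Hs.
Qed.

Lemma order_iso_map (f : nat -> nat) t x :
  {in t &, forall v w, (f v < f w) = (v < w)} ->
  order_iso (map f t) x = order_iso t x.
Proof.
move=> Hf; apply/order_isoP/order_isoP => [][Hs H]; split.
- by rewrite -Hs size_map.
- move=> i j Hi Hj; rewrite -H ?size_map // !(nth_map 0) // Hf // mem_nth //.
- by rewrite size_map.
- move=> i j; rewrite size_map => Hi Hj.
  by rewrite -H // !(nth_map 0) // Hf // mem_nth.
Qed.

Lemma subseqs_subseq s t : t \in subseqs s -> subseq t s.
Proof.
elim: s t => [|v s IH] t; first by rewrite /= inE => /eqP ->.
rewrite [subseqs _]/= mem_cat => /orP [/mapP [t' Ht' ->]|Ht].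
  by rewrite /= eqxx; apply: IH.
apply: (@subseq_trans _ s); [exact: IH | exact: subseq_cons].
Qed.

Lemma subseqs_size s t : t \in subseqs s -> (size t <= size s)%N.
Proof. by move/subseqs_subseq/size_subseq. Qed.

Lemma subseqs_map (f : nat -> nat) s :
  subseqs (map f s) = map (map f) (subseqs s).
Proof.
elim: s => [|v s IH] //=.
by rewrite IH map_cat -!map_comp.
Qed.

Lemma count_subseqs_full (p : pred (seq nat)) s :
  count (fun t => p t && (size t == size s)) (subseqs s) = p s.
Proof.
elim: s p => [|v s IH] p /=; first by rewrite andbT addn0.
rewrite count_cat count_map.
have -> : count (fun t => p t && (size t == (size s).+1)) (subseqs s) = 0%N.
  apply/eqP; rewrite -leqn0 leqNgt -has_count; apply/hasP => -[t Ht].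
  by move/subseqs_size: Ht => Ht /andP [_ /eqP E]; move: Ht; rewrite E ltnn.
by rewrite addn0 -(IH (fun t => p (v :: t))).
Qed.

Lemma occ_size_lt x y : (size y < size x)%N -> occ x y = 0%N.
Proof.
move=> H; apply/eqP; rewrite -leqn0 leqNgt -has_count; apply/hasP => -[t Ht].
move/order_iso_size => E; move/subseqs_size: Ht; rewrite E => H'.
by move: (leq_ltn_trans H' H); rewrite ltnn.
Qed.

Lemma occ_size_eq x y : size y = size x -> occ x y = order_iso y x.
Proof.
move=> E; rewrite /occ -(count_subseqs_full (order_iso^~ x) y).
apply: eq_in_count => t _ /=.
by case H: (order_iso t x) => //=; rewrite (order_iso_size H) E eqxx.
Qed.

Lemma patle_size x y : patle x y -> (size x <= size y)%N.
Proof.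
rewrite /patle /occ -has_count => /hasP [t Ht /order_iso_size <-].
exact: subseqs_size.
Qed.

Lemma is_perm_uniq y : is_perm y -> uniq y.
Proof. by move=> H; rewrite (perm_uniq H) iota_uniq. Qed.

Lemma perms_is_perm z m : z \in perms m -> is_perm z /\ size z = m.
Proof.
rewrite /perms mem_permutations => H.
have E := perm_size H; rewrite size_iota in E.
by split => //; rewrite /is_perm E.
Qed.

Lemma mem_perms_perm x m : is_perm x -> (x \in perms m) = (m == size x).
Proof.
move=> Hx; apply/idP/eqP => [/perms_is_perm [_ ->] //|->].
by rewrite /perms mem_permutations.
Qed.

Lemma count_lt_iota w m : count (fun v => v < w) (iota 1 m) = minn m w.-1.
Proof.
elim: m => [|m IH]; first by rewrite /= min0n.
rewrite -(addn1 m) iotaD count_cat IH /= addn0 add1n.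
rewrite !minnE; case: (ltnP m.+1 w) => H /=.
- rewrite addn1; lia.
- rewrite addn0; lia.
Qed.

Lemma perm_nth_rank z i : is_perm z -> i < size z ->
  nth 0 z i = (count (fun v => v < nth 0 z i) z).+1.
Proof.
move=> Hz Hi; rewrite (permP Hz) count_lt_iota.
have : nth 0 z i \in iota 1 (size z) by rewrite -(perm_mem Hz) mem_nth.
rewrite mem_iota => /andP [H1 H2]; lia.
Qed.

Lemma count_idx (p : pred nat) z :
  count p z = count (fun j => p (nth 0 z j)) (iota 0 (size z)).
Proof. by rewrite -{1}(mkseq_nth 0 z) /mkseq count_map. Qed.

Lemma perm_unique z1 z2 : is_perm z1 -> is_perm z2 -> order_iso z1 z2 -> z1 = z2.
Proof.
move=> H1 H2 /order_isoP [Hs H].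
apply: (eq_from_nth (x0 := 0)) => // i Hi.
have Hi2 : i < size z2 by rewrite -Hs.
rewrite (perm_nth_rank H1 Hi) [RHS](perm_nth_rank H2 Hi2).
apply: congr1; rewrite (count_idx _ z1) (count_idx _ z2) -Hs; apply: eq_in_count => j.
by rewrite mem_iota /= => Hj; apply: H.
Qed.

Definition std (s : seq nat) : seq nat :=
  [seq (count (fun u => u < v) s).+1 | v <- s].

Lemma rank_mono s v w : v \in s ->
  (count (fun u => u < v) s < count (fun u => u < w) s) = (v < w).
Proof.
move=> Hv; case: (ltnP v w) => H.
  have : count (predU (fun u => u < v) (fun u => u == v)) s <= count (fun u => u < w) s.
    by apply: sub_count => u /= /orP [H'|/eqP ->] //; apply: ltn_trans H'  H.
  have := count_predUI (fun u => u < v) (fun u => u == v) s.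
  have -> : count (predI (fun u => u < v) (fun u => u == v)) s = 0.
    apply/eqP; rewrite -leqn0 leqNgt -has_count; apply/hasP => -[u _ /andP [/= H1 /eqP H2]].
    by rewrite H2 ltnn in H1.
  have : 0 < count (fun u => u == v) s by rewrite -has_count; apply/hasP; exists v.
  move=> h1 h2 h3; rewrite addn0 in h2; apply: (leq_trans _ h3); rewrite h2 -[X in X < _]addn0 ltn_add2l; exact: h1.
apply/negbTE; rewrite -leqNgt; apply: sub_count => u /= H'.
exact: leq_trans H' H.
Qed.

Lemma std_iso s : order_iso s (std s).
Proof.
apply/order_isoP; split; first by rewrite size_map.
move=> i j Hi Hj; rewrite !(nth_map 0) // ltnS rank_mono // mem_nth //.
Qed.

Lemma std_perm s : uniq s -> is_perm (std s).
Proof.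
move=> Hu; rewrite /is_perm.
have Hu' : uniq (std s).
  rewrite map_inj_in_uniq // => v w Hv Hw [] E.
  apply/eqP; case: (ltngtP v w) => // H.
    by move: (rank_mono w Hv); rewrite E ltnn H.
  by move: (rank_mono v Hw); rewrite E ltnn H.
apply: uniq_perm => //; first exact: iota_uniq.
have Hsub : {subset std s <= iota 1 (size (std s))}.
  move=> r /mapP [v Hv ->]; rewrite mem_iota size_map.
  have := count_predC (fun u => u < v) s.
  have : 0 < count (predC (fun u => u < v)) s.
    by rewrite -has_count; apply/hasP; exists v => //=; rewrite ltnn.
  lia.
have Hsz : size (iota 1 (size (std s))) <= size (std s) by rewrite size_iota.
have [_ E] := uniq_min_size Hu' Hsub Hsz.
exact: E.
Qed.

Lemma count_iso_perms s m : uniq s ->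
  count (order_iso s) (perms m) = (m == size s).
Proof.
move=> Hu; case: eqP => [Em|Hm].
  have Hp := std_perm Hu.
  rewrite (@eq_in_count _ _ (pred1 (std s))).
    by rewrite (count_uniq_mem _ (permutations_uniq _)) (mem_perms_perm _ Hp) size_map Em eqxx.
  move=> z Hz /=; have [Hzp _] := perms_is_perm Hz.
  apply/idP/eqP => [H|->]; last exact: std_iso.
  apply: perm_unique => //; apply: order_iso_trans (order_iso_sym H) (std_iso s).
apply/eqP; rewrite -leqn0 leqNgt -has_count; apply/hasP => -[z Hz /order_iso_size E].
by have [_ E'] := perms_is_perm Hz; apply: Hm; rewrite -E' E.
Qed.

Lemma occ_iso x s z : order_iso s z -> occ x z = occ x s.
Proof.
case/order_isoP => Hs H.
pose f v := nth 0 z (index v s).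
have Ez : z = map f s.
  apply: (eq_from_nth (x0:=0)); first by rewrite size_map.
  move=> i Hi; rewrite -Hs in Hi; rewrite (nth_map 0) // /f.
  have Hm : nth 0 s i \in s by rewrite mem_nth.
  have Hi's : index (nth 0 s i) s < size s by rewrite index_mem.
  have Hn : nth 0 s (index (nth 0 s i) s) = nth 0 s i by rewrite nth_index.
  have h1 := H i _ Hi Hi's; have h2 := H _ i Hi's Hi.
  rewrite Hn ltnn in h1 h2.
  move/esym/negbT: h1; move/esym/negbT: h2; rewrite -!leqNgt => h1 h2.
  by apply/eqP; rewrite eqn_leq h1 h2.
rewrite Ez /occ subseqs_map count_map; apply: eq_in_count => t Ht /=.
apply: order_iso_map => v w Hv Hw.
have Hss := subseqs_subseq Ht.
have Hv' : v \in s by apply: (mem_subseq Hss).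
have Hw' : w \in s by apply: (mem_subseq Hss).
have := H (index v s) (index w s); rewrite !nth_index // !index_mem => h.
by rewrite /f h.
Qed.

Local Open Scope ring_scope.

Lemma subseqs_sum (h : seq nat -> rat) (a c : rat) y :
  \sum_(s <- subseqs y) \sum_(t <- subseqs s)
      h t * a ^+ (size s - size t) * c ^+ (size y - size s)
  = \sum_(t <- subseqs y) h t * (a + c) ^+ (size y - size t).
Proof.
elim: y h => [|v y IH] h.
  by rewrite /= !big_seq1 /= !expr0 !mulr1.
rewrite [subseqs (v :: y)]/= !big_cat !big_map /=.
have E1 : \sum_(s <- subseqs y) \sum_(t <- [seq v :: i | i <- subseqs s] ++ subseqs s)
      h t * a ^+ ((size s).+1 - size t) * c ^+ ((size y).+1 - (size s).+1)
   = \sum_(s <- subseqs y) \sum_(t <- subseqs s)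
      h (v :: t) * a ^+ (size s - size t) * c ^+ (size y - size s)
     + a * \sum_(s <- subseqs y) \sum_(t <- subseqs s)
      h t * a ^+ (size s - size t) * c ^+ (size y - size s).
  rewrite big_distrr -big_split /=; apply: eq_big_seq => s Hs.
  rewrite big_cat big_map big_distrr /=; congr (_ + _).
  apply: eq_big_seq => t Ht; rewrite subSS.
  by rewrite subSn ?subseqs_size // exprS; ring.
have E2 : \sum_(s <- subseqs y) \sum_(t <- subseqs s)
      h t * a ^+ (size s - size t) * c ^+ ((size y).+1 - size s)
   = c * \sum_(s <- subseqs y) \sum_(t <- subseqs s)
      h t * a ^+ (size s - size t) * c ^+ (size y - size s).
  rewrite big_distrr; apply: eq_big_seq => s Hs; rewrite big_distrr.
  apply: eq_bigr => t _ /=; rewrite subSn ?subseqs_size // exprS; ring.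
rewrite E1 E2 !IH -addrA -mulrDl big_distrr; congr (_ + _).
apply: eq_big_seq => t Ht /=; rewrite subSn ?subseqs_size // exprS; ring.
Qed.
Local Open Scope ring_scope.

Lemma natr_count (T : Type) (p : pred T) (l : seq T) :
  ((count p l)%:R : rat) = \sum_(v <- l) ((p v)%:R : rat).
Proof.
elim: l => [|v l IH]; first by rewrite big_nil.
by rewrite big_cons /= natrD IH.
Qed.

Lemma sum_eqk N k : \sum_(m < N) (((m : nat) == k)%:R : rat) = (k < N)%:R.
Proof.
elim: N => [|N IH]; first by rewrite big_ord0.
rewrite big_ord_recr /= IH.
case: (ltngtP k N) => H.
- by rewrite (ltn_trans H (ltnSn N)) addr0.
- by rewrite ltnS leqNgt H addr0.
- by rewrite H ltnSn add0r.
Qed.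

Definition Gw (a c : rat) (x y z : seq nat) :=
  a ^+ (size z - size x) * Pmat x z * c ^+ (size y - size z).

Lemma core x y (a c : rat) : is_perm x -> is_perm y ->
  \sum_(m < (size y).+1) \sum_(z <- perms m)
     (a ^+ (size z - size x) * Pmat x z) * (c ^+ (size y - size z) * Pmat z y)
  = (a + c) ^+ (size y - size x) * Pmat x y.
Proof.
move=> Hx Hy.
transitivity (\sum_(m < (size y).+1) \sum_(z <- perms m)
   \sum_(s <- subseqs y) (order_iso s z)%:R * Gw a c x y z).
  apply: eq_bigr => m _; apply: eq_bigr => z _.
  rewrite -big_distrl /= -natr_count /Gw /Pmat /occ; ring.
under eq_bigr => m _ do rewrite exchange_big.
rewrite exchange_big /=.
transitivity (\sum_(s <- subseqs y) Gw a c x y s).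
  apply: eq_big_seq => s Hs.
  have Hss := subseqs_subseq Hs.
  have Hu : uniq s by apply: subseq_uniq Hss (is_perm_uniq Hy).
  transitivity (\sum_(m < (size y).+1) \sum_(z <- perms m)
                   (order_iso s z)%:R * Gw a c x y s).
    apply: eq_bigr => m _; apply: eq_bigr => z _.
    case Hi: (order_iso s z); last by rewrite !mul0r.
    by rewrite /Gw /Pmat (occ_iso x Hi) (order_iso_size Hi).
  under eq_bigr => m _ do rewrite -big_distrl /= -natr_count count_iso_perms //.
  by rewrite -big_distrl /= sum_eqk ltnS size_subseq // mul1r.
transitivity (\sum_(s <- subseqs y) \sum_(t <- subseqs s)
   (order_iso t x)%:R * a ^+ (size s - size t) * c ^+ (size y - size s)).
  apply: eq_bigr => s _; rewrite /Gw /Pmat /occ natr_count !big_distrr big_distrl /=.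
  apply: eq_bigr => t _.
  case Hi: (order_iso t x); last by rewrite /=; ring.
  rewrite (order_iso_size Hi) /=; ring.
rewrite subseqs_sum /Pmat /occ natr_count big_distrr /=.
apply: eq_bigr => t _.
case Hi: (order_iso t x); last by rewrite /=; ring.
rewrite (order_iso_size Hi) /=; ring.
Qed.
Local Open Scope ring_scope.

Lemma Pmat_small x y : is_perm x -> is_perm y -> (size y <= size x)%N ->
  Pmat x y = (x == y)%:R.
Proof.
move=> Hx Hy; rewrite leq_eqVlt => /orP [/eqP E|H].
  rewrite /Pmat occ_size_eq //.
  case Hi: (order_iso y x).
    by rewrite (perm_unique Hy Hx Hi) eqxx.
  case: eqP => // E'; by rewrite E' order_iso_refl in Hi.
rewrite /Pmat occ_size_lt //; case: eqP => // E; by rewrite E ltnn in H.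
Qed.

Lemma not_patle_P u v : ~~ patle u v -> Pmat u v = 0.
Proof. by rewrite /patle lt0n negbK /Pmat => /eqP ->. Qed.

Lemma conv_formula (F G : incfun) (a c : rat) x y :
  is_perm x -> is_perm y ->
  (forall z, is_perm z -> F x z = a ^+ (size z - size x) * Pmat x z) ->
  (forall z, is_perm z -> G z y = c ^+ (size y - size z) * Pmat z y) ->
  conv F G x y = (a + c) ^+ (size y - size x) * Pmat x y.
Proof.
move=> Hx Hy HF HG; rewrite /conv -core //; apply: eq_bigr => m _.
rewrite big_mkcond; apply: eq_big_seq => z Hz /=.
have [Hzp _] := perms_is_perm Hz; rewrite HF // HG //.
case: ifP => // /negbT; rewrite negb_and => /orP [] /not_patle_P ->;
  by rewrite ?mulr0 ?mul0r ?mulr0.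
Qed.

Lemma idelta_formula x y : is_perm x -> is_perm y ->
  idelta x y = 0 ^+ (size y - size x) * Pmat x y.
Proof.
move=> Hx Hy; case: (leqP (size y) (size x)) => H.
  by rewrite Pmat_small // (_ : size y - size x = 0)%N ?expr0 ?mul1r //; lia.
rewrite expr0n (_ : (size y - size x == 0)%N = false); last by apply/negbTE; lia.
rewrite mul0r /idelta; case: eqP => // E; by rewrite E ltnn in H.
Qed.

Lemma pos_pow n x y : is_perm x -> is_perm y ->
  iter n (conv Pmat) idelta x y = (n%:R) ^+ (size y - size x) * Pmat x y.
Proof.
elim: n x => [|n IH] x Hx Hy; first by rewrite /= idelta_formula.
rewrite iterS -nat1r; apply: conv_formula => // z Hz.
  by rewrite expr1n mul1r.
exact: IH.
Qed.

Lemma inv_aux_formula k x y : is_perm x -> is_perm y ->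
  (size y - size x <= k)%N ->
  inv_aux Pmat k x y = (-1) ^+ (size y - size x) * Pmat x y.
Proof.
elim: k x => [|k IH] x Hx Hy Hk /=.
  case: eqP => [->|Hne].
    by rewrite (Pmat_small Hy Hy (leqnn _)) eqxx subnn expr0 mul1r invr1.
  rewrite Pmat_small //; last by lia.
  by case: eqP Hne => // _ _; rewrite mulr0.
case: eqP => [->|Hne].
  by rewrite (Pmat_small Hy Hy (leqnn _)) eqxx subnn expr0 mul1r invr1.
rewrite (Pmat_small Hx Hx (leqnn _)) eqxx invr1 mulN1r.
pose T z := Pmat x z * ((-1) ^+ (size y - size z) * Pmat z y).
have Hsum : \sum_(n < (size y).+1)
    \sum_(z <- perms n | patle x z && patle z y && (z != x))
       Pmat x z * inv_aux Pmat k z y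
  = \sum_(n < (size y).+1) \sum_(z <- perms n) T z
    - \sum_(n < (size y).+1) \sum_(z <- perms n) (z == x)%:R * T z.
  rewrite -sumrB; apply: eq_bigr => m _; rewrite -sumrB big_mkcond.
  apply: eq_big_seq => z Hz /=.
  have [Hzp _] := perms_is_perm Hz.
  case: eqP => [->|Hzx] /=; first by rewrite andbF mul1r subrr.
  rewrite andbT mul0r subr0; case: ifP => [/andP [H1 H2]|/negbT].
    have Hlt : (size x < size z)%N.
      rewrite ltn_neqAle patle_size // andbT; apply/eqP => E.
      have := Pmat_small Hx Hzp (eq_leq (esym E)).
      rewrite (_ : (x == z) = false); last by apply/eqP => E'; apply: Hzx; rewrite E'.
      move/eqP; rewrite /Pmat pnatr_eq0 => /eqP E2.
      by move: H1; rewrite /patle E2.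
    rewrite IH //; have := leq_sub2l (size y) Hlt; rewrite subnS => h.
    by apply: leq_trans h _; rewrite -subn1 leq_subLR add1n.
  rewrite /T negb_and => /orP [] /not_patle_P ->; by rewrite ?mulr0 ?mul0r ?mulr0.
have Hfull : \sum_(n < (size y).+1) \sum_(z <- perms n) T z
    = (1 + -1) ^+ (size y - size x) * Pmat x y.
  rewrite -core //; apply: eq_bigr => m _; apply: eq_bigr => z _.
  by rewrite /T expr1n mul1r.
have Hone : \sum_(n < (size y).+1) \sum_(z <- perms n) (z == x)%:R * T z
    = (-1) ^+ (size y - size x) * Pmat x y.
  transitivity (\sum_(n < (size y).+1) ((n : nat) == size x)%:R * T x).
    apply: eq_bigr => m _.
    rewrite -(mem_perms_perm _ Hx) -(count_uniq_mem _ (permutations_uniq _)).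
    rewrite natr_count big_distrl; apply: eq_bigr => z _ /=.
    by case: eqP => [->|_] //; rewrite !mul0r.
  rewrite -big_distrl /= sum_eqk /T.
  rewrite (Pmat_small Hx Hx (leqnn _)) eqxx mul1r ltnS.
  case: (leqP (size x) (size y)) => H; first by rewrite mul1r.
  by rewrite (Pmat_small Hx Hy (ltnW H)); case: eqP Hne => // _ _; rewrite !mulr0.
rewrite Hsum Hfull Hone subrr.
case: (leqP (size y) (size x)) => H.
  rewrite (Pmat_small Hx Hy H); case: eqP Hne => // _ _; rewrite !mulr0; ring.
rewrite expr0n (_ : (size y - size x == 0)%N = false); last by apply/negbTE; lia.
by rewrite mul0r sub0r opprK.
Qed.

Lemma inv_formula x y : is_perm x -> is_perm y ->
  Defs.inv Pmat x y = (-1) ^+ (size y - size x) * Pmat x y.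
Proof. by move=> Hx Hy; rewrite /Defs.inv inv_aux_formula. Qed.

Lemma neg_pow n x y : is_perm x -> is_perm y ->
  iter n (conv (Defs.inv Pmat)) idelta x y = (- n%:R) ^+ (size y - size x) * Pmat x y.
Proof.
elim: n x => [|n IH] x Hx Hy; first by rewrite /= oppr0 idelta_formula.
rewrite iterS -nat1r opprD; apply: conv_formula => // z Hz.
  exact: inv_formula.
exact: IH.
Qed.

Unset Implicit Arguments.
Theorem mainTheorem6 (sigma pi : seq nat) (d : int) :
  is_perm sigma -> is_perm pi ->
  ipow Pmat d sigma pi = (d%:~R : rat) ^+ (size pi - size sigma) * Pmat sigma pi.
Proof.
move=> Hs Hp; case: d => n; rewrite /ipow.
  by rewrite pos_pow // -pmulrn.
by rewrite neg_pow // NegzE mulrNz -pmulrn.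
Qed.
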